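(* There exist absolute positive constants $c,C$ such that the following holds. For a positive integer $n$ let $\pi$ be a uniformly random permutation of $\{1,\dots,n\}$ and $W=\sum_{i=1}^n \mathbf 1\{\pi(i)=i\}$ its number of fixed points. Let $Y\sim\mathrm{Poi}(1)$. Then for all positive integers $k$ with $k^2/n\le c$, $$\Big|\frac{P(W\ge k)}{P(Y\ge k)}-1\Big|\le \frac{Ck^2}{n}.$$
   Context: $\mathrm{Poi}(1)$ is the Poisson distribution with mean $1$. *)

(* Defs.v *)
From mathcomp Require Import all_boot all_fingroup.
From Stdlib Require Import Reals.

Definition fixpts {n : nat} (s : 'S_n) : nat := #|[set i : 'I_n | s i == i]|.

Definition count_fix_ge (n k : nat) : nat :=
  #|[set s : 'S_n | (k <= fixpts s)%N]|.

Definition PW_ge (n k : nat) : R :=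
  Rdiv (INR (count_fix_ge n k)) (INR (n`!)).

Definition poi1 (j : nat) : R := Rdiv (exp (-1)) (INR (factorial j)).

Fixpoint poi1_cdf_lt (k : nat) : R :=
  match k with
  | O => 0%R
  | S k' => Rplus (poi1_cdf_lt k') (poi1 k')
  end.

Definition PY_ge (k : nat) : R := Rminus 1 (poi1_cdf_lt k).

(* Main.v *)
Require Import Defs.
From mathcomp Require Import all_boot all_order all_algebra all_fingroup.
From mathcomp Require Import Rstruct.
From Stdlib Require Import Reals Lia.
From mathcomp Require Import ring lra zify.
Set Implicit Arguments.
Unset Strict Implicit.
Unset Printing Implicit Defensive.
Import Order.TTheory GRing.Theory Num.Theory.
Bind Scope ring_scope with R.

Section Comb.
Local Open Scope nat_scope.

Lemma sum_bool_card (T : finType) (P : pred T) :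
  \sum_(x : T) (P x : nat) = #|P|.
Proof.
by rewrite -sum1_card [RHS]big_mkcond; apply: eq_bigr => x _; rewrite unfold_in; case: (P x).
Qed.

Lemma fix_le n (s : 'S_n) : fixpts s <= n.
Proof. by rewrite /fixpts; apply: leq_trans (max_card _) _; rewrite card_ord. Qed.

Lemma sum_binfix n r :
  \sum_(s : 'S_n) 'C(fixpts s, r) = 'C(n, r) * (n - r)`!.
Proof.
transitivity (\sum_(s : 'S_n) \sum_(B : {set 'I_n} | #|B| == r)
                 (B \subset [set i | s i == i] : nat)).
  apply: eq_bigr => s _; rewrite /fixpts -cards_draws -sum1_card big_mkcond
    [RHS]big_mkcond /=; apply: eq_bigr => B _; rewrite inE.
  by case: (B \subset _); case: (#|B| == r).
rewrite exchange_big /=.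
transitivity (\sum_(B : {set 'I_n} | #|B| == r) (n - r)`!).
  apply: eq_bigr => B /eqP hB.
  transitivity (\sum_(s : 'S_n) ((s \in perm_on (~: B)) : nat)); last first.
    rewrite sum_bool_card card_perm.
    have := cardsC B; rewrite card_ord hB => hC.
    by have -> : (n - r = #|~: B|)%nat by rewrite -[in LHS]hC addKn.
  apply: eq_bigr => s _; congr nat_of_bool.
  apply/idP/idP.
    move/subsetP=> h; rewrite unfold_in; apply/subsetP => x; rewrite inE => hx.
    by rewrite inE; apply/negP => /h; rewrite inE (negbTE hx).
  rewrite unfold_in => /subsetP h; apply/subsetP => x hx; rewrite inE.
  by apply/negPn/negP => /h; rewrite inE hx.
rewrite sum_nat_const.
congr (_ * _).
have := card_draws ('I_n) r; rewrite card_ord => <-.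
by apply: eq_card => B; rewrite inE unfold_in.
Qed.


Lemma binmul (w r j : nat) : j <= r ->
  'C(r, j) * 'C(w, r) = 'C(w, j) * 'C(w - j, r - j).
Proof.
move=> hjr; case: (leqP r w) => hrw; last first.
  rewrite (bin_small hrw) muln0.
  case: (ltnP w j) => hwj; first by rewrite (bin_small hwj).
  rewrite [X in _ * X]bin_small ?muln0 //; lia.
have hjw : j <= w by exact: leq_trans hjr hrw.
have hrj : r - j <= w - j by exact: leq_sub2r.
apply/eqP; rewrite -(eqn_pmul2r (_ : 0 < j`! * (r - j)`! * (w - r)`!));
  last by rewrite !muln_gt0 !fact_gt0.
apply/eqP; transitivity w`!.
  rewrite -(bin_fact hrw) -(bin_fact hjr); nia.
have e : w - j - (r - j) = w - r by lia.
rewrite -(bin_fact hjw) -(bin_fact hrj) e; nia.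
Qed.

Lemma G m : 0 < m -> m * expn 2 m <= 4 * m`!.
Proof.
elim: m => // m IH _.
case: m IH => [|m] IH; first by [].
case: m IH => [|m] IH; first by [].
have := IH isT; rewrite factS !expnS => h.
have hX : expn 2 m <= m.+1 * m`!.
  rewrite -(leq_pmul2l (_ : 0 < 4 * m.+2)) //.
  move: h; rewrite factS; nia.
rewrite !factS.
have h2 : 2 * (m.+3 * (expn 2 m)) <= 2 * (m.+3 * (m.+1 * m`!)).
  by rewrite leq_pmul2l // leq_pmul2l.
nia.
Qed.

End Comb.

Section RealPart.
Local Open Scope ring_scope.

Lemma altbin (w j n : nat) : (w <= n)%nat ->
  \sum_(j <= r < n.+1) (-1) ^+ (r - j) * ('C(r, j))%:R * ('C(w, r))%:R
  = (w == j)%:R :> R.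
Proof.
move=> hwn; case: (ltnP w j) => hwj.
  rewrite (ltn_eqF hwj) big_nat_cond big1 // => r /andP[/andP[hjr _] _].
  by rewrite (@bin_small w r) ?mulr0 //; exact: leq_trans hwj hjr.
transitivity (('C(w, j))%:R * \sum_(j <= r < n.+1)
                 (-1) ^+ (r - j) * ('C(w - j, r - j))%:R :> R).
  rewrite mulr_sumr big_nat_cond [RHS]big_nat_cond; apply: eq_bigr.
  move=> r /andP[/andP[hjr _] _].
  by rewrite -mulrA -natrM binmul // natrM; ring.
rewrite (big_addn 0 n.+1 j).
under eq_bigr => i _ do rewrite addnK.
have hle : ((w - j).+1 <= n.+1 - j)%nat by lia.
rewrite (big_cat_nat (leq0n _) hle) /=.
rewrite [X in _ + X]big_nat_cond [X in _ + X]big1 ?addr0; last first.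
  move=> i /andP[/andP[hi _] _]; by rewrite bin_small ?mulr0.
rewrite big_mkord.
have := exprBn (1 : R) 1 (w - j); rewrite subrr.
under eq_bigr => i _ do rewrite !expr1n !mulr1 -mulr_natr.
move=> <-.
case: (eqVneq w j) => [->|hne]; first by rewrite subnn expr0 binn mulr1.
have hpos : (0 < w - j)%nat by rewrite subn_gt0 ltn_neqAle eq_sym hne hwj.
by rewrite -(prednK hpos) exprS mul0r mulr0.
Qed.

Lemma ind_ge (k w n : nat) :
  \sum_(k <= j < n) (w == j)%:R = ((k <= w)%nat && (w < n)%nat)%:R :> R.
Proof.
elim: n => [|n IH]; first by rewrite big_geq // ltn0 andbF.
case: (leqP k n) => hkn; last first.
  rewrite big_geq //; case: (leqP k w) => // hkw /=.
  by rewrite ltnNge (leq_trans hkn hkw).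
rewrite big_nat_recr //= IH.
case: (ltngtP w n) => h.
- by rewrite andbT ltnS (ltnW h) andbT addr0.
- by rewrite andbF addr0 ltnS (leqNgt w n) h andbF.
- by rewrite andbF add0r h ltnS leqnn andbT hkn.
Qed.


Definition a (j : nat) : R := (j`!%:R)^-1.
Definition d (m : nat) : R := \sum_(0 <= t < m.+1) (-1) ^+ t * a t.

Lemma fact_neq0 j : (j`!%:R : R) != 0.
Proof. by rewrite pnatr_eq0 -lt0n fact_gt0. Qed.

Lemma PW_eq n k : PW_ge n k = \sum_(k <= j < n.+1) a j * d (n - j).
Proof.
rewrite /PW_ge /count_fix_ge RdivE !INRE.
have hc : #|[set s : 'S_n | (k <= fixpts s)%nat]| =
          (\sum_(s : 'S_n) ((k <= fixpts s)%nat : nat))%nat.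
  by rewrite sum_bool_card; apply: eq_card => s; rewrite inE.
rewrite hc natr_sum.
transitivity ((\sum_(s : 'S_n) \sum_(k <= j < n.+1) \sum_(j <= r < n.+1)
   (-1) ^+ (r - j) * ('C(r, j))%:R * ('C(fixpts s, r))%:R) / (n`!)%:R : R).
  congr (_ / _); apply: eq_bigr => s _.
  rewrite (_ : ((k <= fixpts s)%nat : nat)%:R =
     ((k <= fixpts s)%nat && (fixpts s < n.+1)%nat)%:R :> R); last first.
    by rewrite ltnS fix_le andbT.
  rewrite -ind_ge; apply: eq_bigr => j _.
  by rewrite altbin // fix_le.
rewrite exchange_big /= mulr_suml; apply: eq_big_nat => j /andP[hkj hjn].
rewrite exchange_big /= mulr_suml.
transitivity (\sum_(j <= r < n.+1) a j * ((-1) ^+ (r - j) * a (r - j)) : R).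
  apply: eq_big_nat => r /andP[hjr hrn].
  rewrite -mulr_sumr -natr_sum sum_binfix.
  have e : n`! = ('C(r, j) * ('C(n, r) * (n - r)`!) * (j`! * (r - j)`!))%nat.
    rewrite -(bin_fact (_ : (r <= n)%nat)) -?(bin_fact hjr); first nia.
    by rewrite -ltnS.
  rewrite e /a !natrM; field.
  by rewrite !fact_neq0 !pnatr_eq0 -!lt0n !bin_gt0 hjr -ltnS hrn.
rewrite -mulr_sumr /d; congr (_ * _).
rewrite (big_addn 0 n.+1 j).
under eq_bigr => i _ do rewrite addnK.
by rewrite subSn // -ltnS.
Qed.


Definition Em : R := exp (IZR (Zneg 1)).
Definition Sa (N : nat) : R := \sum_(0 <= j < N) a j.

Lemma PY_eq k : PY_ge k = 1 - Em * Sa k.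
Proof.
rewrite /PY_ge RminusE; congr (_ - _).
elim: k => [|k IH] /=; first by rewrite /Sa big_geq // mulr0.
rewrite IH /Sa big_nat_recr //= /poi1 RdivE INRE RplusE mulrDr.
by [].
Qed.

Lemma a_gt0 j : 0 < a j.
Proof. by rewrite /a invr_gt0 ltr0n fact_gt0. Qed.

Lemma aS j : a j.+1 = a j / (j.+1)%:R.
Proof. by rewrite /a factS natrM invfM mulrC. Qed.

Lemma a2 j : (1 <= j)%nat -> 2 * a j.+1 <= a j.
Proof.
move=> hj; rewrite aS.
have h0 := a_gt0 j.
have h2 : 2 <= (j.+1)%:R :> R by rewrite ler_nat ltnS.
rewrite mulrA ler_pdivrMr ?(lt_le_trans _ h2) // mulrC ler_pM2l //.
Qed.

Lemma a_dec j : a j.+1 <= a j.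
Proof.
rewrite aS ler_pdivrMr ?ltr0n //.
have := a_gt0 j; have : 1 <= (j.+1)%:R :> R by rewrite ler1n.
nra.
Qed.

Lemma a_split k j : (k <= j)%nat -> a j <= a k * a (j - k).
Proof.
move=> hkj; rewrite /a -invfM lef_pV2 ?posrE ?ltr0n ?muln_gt0 ?fact_gt0 //;
  last by rewrite -natrM ltr0n muln_gt0 !fact_gt0.
rewrite -natrM ler_nat -(bin_fact hkj) leq_pmull // bin_gt0 //.
Qed.

Lemma cv_le_ev (u : nat -> R) l b N : Un_cv u l ->
  (forall n, (N <= n)%nat -> u n <= b) -> l <= b.
Proof.
move=> hu hb; rewrite leNgt; apply/negP => hlt.
have he : Rgt (l - b) 0 by apply/RltP; rewrite subr_gt0.
case: (hu _ he) => M hM.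
have hMM : (M <= maxn N M)%coq_nat by apply/ssrnat.leP; exact: leq_maxr.
have /RltP := hM (maxn N M) hMM.
rewrite RdistE ltr_norml => /andP[h1 h2].
have := hb _ (leq_maxl N M); lra.
Qed.

Lemma cv_ge_ev (u : nat -> R) l b N : Un_cv u l ->
  (forall n, (N <= n)%nat -> b <= u n) -> b <= l.
Proof.
move=> hu hb; rewrite leNgt; apply/negP => hlt.
have he : Rgt (b - l) 0 by apply/RltP; rewrite subr_gt0.
case: (hu _ he) => M hM.
have hMM : (M <= maxn N M)%coq_nat by apply/ssrnat.leP; exact: leq_maxr.
have /RltP := hM (maxn N M) hMM.
rewrite RdistE ltr_norml => /andP[h1 h2].
have := hb _ (leq_maxl N M); lra.
Qed.

Lemma Sa_cv : Un_cv (fun N => Sa N.+1) (exp 1).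
Proof.
apply: (Un_cv_ext (fun N => sum_f_R0 (fun i => Rmult (Rinv (INR (Factorial.fact i))) (pow 1 i)) N)).
  move=> N; rewrite sum_f_R0E /Sa; apply: eq_bigr => i _.
  by rewrite INRE factE RpowE expr1n RmultE RinvE mulr1.
exact: (proj2_sig (exist_exp 1)).
Qed.

Lemma Sa_mono N M : (N <= M)%nat -> Sa N <= Sa M.
Proof.
move=> h; rewrite /Sa (big_cat_nat (leq0n N) h) /= lerDl.
by apply: sumr_ge0 => i _; apply: ltW; apply: a_gt0.
Qed.

Lemma exp_lower N : Sa N <= exp 1.
Proof.
apply: (@cv_ge_ev _ _ _ N Sa_cv) => M hM; apply: Sa_mono; lia.
Qed.

Lemma tail N p : (1 <= N)%nat ->
  \sum_(N <= j < N + p) a j + 2 * a (N + p) <= 2 * a N.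
Proof.
move=> hN; elim: p => [|p IH]; first by rewrite addn0 big_geq // add0r.
rewrite addnS big_nat_recr /= ?leq_addr //.
have hNp : (1 <= N + p)%nat by lia.
have := a2 hNp.
lra.
Qed.

Lemma exp_upper N : (1 <= N)%nat -> exp 1 <= Sa N + 2 * a N.
Proof.
move=> hN; apply: (@cv_le_ev _ _ _ 0 Sa_cv) => M _.
case: (leqP M.+1 N) => h.
  have := Sa_mono h; have := a_gt0 N; lra.
rewrite -(subnKC (ltnW h)) /Sa (big_cat_nat (leq0n N) (leq_addr _ _)) /=.
have := tail (M.+1 - N) hN; have := a_gt0 (N + (M.+1 - N)); lra.
Qed.

Lemma exp1_eq : Em * exp 1 = 1.
Proof.
rewrite /Em -RmultE -exp_plus (_ : Rplus (IZR (Zneg 1)) 1 = 0); first exact: exp_0.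
by rewrite RplusE addrC (_ : IZR (Zneg 1) = -1) // subrr.
Qed.

Lemma Em_gt0 : 0 < Em.
Proof. by apply/RltP; apply: exp_pos. Qed.


Lemma d_bound m : `|d m - Em| <= a m.+1.
Proof.
pose Un := fun n => Rinv (INR (Factorial.fact n)).
have hUn : forall n, Un n = a n by move=> n; rewrite /Un INRE factE RinvE.
have dec : Un_decreasing Un by move=> n; apply/RleP; rewrite !hUn; exact: a_dec.
have cv0 : Un_cv Un 0.
  apply: (Un_cv_ext (fun n => Rdiv (pow 1 n) (INR (Factorial.fact n)))).
    by move=> n; rewrite /Un RdivE RpowE expr1n mul1r RinvE.
  exact: cv_speed_pow_fact.
have cvs : Un_cv (fun N => sum_f_R0 (tg_alt Un) N) Em.
  apply: (Un_cv_ext (fun N => sum_f_R0 (fun i => Rmult (Rinv (INR (Factorial.fact i)))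
                                          (pow (IZR (Zneg 1)) i)) N)).
    move=> N; apply: sum_eq => i _; rewrite /tg_alt /Un; exact: Rmult_comm.
  exact: (proj2_sig (exist_exp (IZR (Zneg 1)))).
have hm1 : IZR (Zneg 1) = -1 :> R by [].
have hs : forall N, sum_f_R0 (tg_alt Un) N = d N.
  move=> N; rewrite sum_f_R0E /d; apply: eq_bigr => i _.
  by rewrite /tg_alt hUn RmultE RpowE hm1.
have key : forall N, d (2 * N).+1 <= Em <= d (2 * N).
  move=> N; have [h1 h2] := alternated_series_ineq Un Em N dec cv0 cvs.
  by move: h1 h2; rewrite !hs => /RleP h1 /RleP h2; rewrite h1 h2.
have dS : forall N, d N.+1 = d N + (-1) ^+ N.+1 * a N.+1.
  by move=> N; rewrite /d big_nat_recr.
have [N [->|->]] : exists N, m = (2 * N)%nat \/ m = (2 * N).+1.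
  exists m./2; have := odd_double_half m; rewrite -mul2n.
  by case: (odd m) => /= h; [right|left]; lia.
- have /andP[h1 h2] := key N.
  move: h1; rewrite dS -signr_odd oddS oddM /= expr1 => h1.
  rewrite ler_norml; lra.
- have /andP[h1 _] := key N.
  have /andP[_ h2] := key N.+1.
  have e : (2 * N.+1 = (2 * N).+2)%nat by lia.
  move: h2; rewrite e dS -signr_odd !oddS oddM /= expr0 => h2.
  rewrite ler_norml; lra.
Qed.


Lemma binsum m : \sum_(i < m.+1) a i * a (m - i) = 2 ^+ m * a m.
Proof.
have h2 : (2 : R) ^+ m = \sum_(i < m.+1) ('C(m, i))%:R.
  have -> : (2 : R) = 1 + 1 by lra.
  by rewrite exprDn; apply: eq_bigr => i _; rewrite !expr1n mul1r.
rewrite h2 mulr_suml; apply: eq_bigr => [[i /= hi]] _.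
rewrite ltnS in hi.
have e := bin_fact hi.
rewrite /a -e !natrM; field.
by rewrite !fact_neq0 pnatr_eq0 -lt0n bin_gt0 hi.
Qed.

Lemma main_sum n k : (k <= n)%nat ->
  \sum_(k <= j < n.+1) a j * a (n - j).+1
    <= a k * (2 ^+ (n.+1 - k) * a (n.+1 - k)).
Proof.
move=> hkn.
apply: (@le_trans _ _ (\sum_(k <= j < n.+1) a k * (a (j - k) * a (n - j).+1))).
  apply: ler_sum_nat => j /andP[hkj _]; rewrite mulrA; apply: ler_wpM2r.
    exact: ltW (a_gt0 _).
  exact: a_split.
rewrite -mulr_sumr; apply: ler_wpM2l; first exact: ltW (a_gt0 _).
rewrite -binsum.
rewrite (big_addn 0 n.+1 k).
under eq_bigr => i _ do rewrite addnK.
rewrite -(big_mkord xpredT (fun i => a i * a (n.+1 - k - i))) big_nat_recr //=.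
have -> : \sum_(0 <= i < n.+1 - k) a i * a (n - (i + k)).+1 =
          \sum_(0 <= i < n.+1 - k) a i * a (n.+1 - k - i).
  apply: eq_big_nat => i /andP[_ hi]; congr (_ * a _); lia.
rewrite lerDl; apply: mulr_ge0; exact: ltW (a_gt0 _).
Qed.

Lemma G_R m : (1 <= m)%nat -> m%:R * (2 ^+ m * a m) <= 4 :> R.
Proof.
move=> hm; have := G hm.
rewrite -(ler_nat R) !natrM natrX => h.
rewrite /a mulrA ler_pdivrMr ?ltr0n ?fact_gt0 //.
Qed.

Definition c0 : R := (4%:R)^-1.
Definition C0 : R := 72%:R.

Lemma core n k : (0 < n)%nat -> (0 < k)%nat ->
  k%:R ^+ 2 / n%:R <= c0 ->
  `|PW_ge n k / PY_ge k - 1| <= C0 * k%:R ^+ 2 / n%:R.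
Proof.
move=> hn hk hc.
have hnR : 0 < n%:R :> R by rewrite ltr0n.
have hkk : (k * k * 4 <= n)%nat.
  have : k%:R ^+ 2 * 4 <= n%:R :> R.
    move: hc; rewrite ler_pdivrMr // => hc; rewrite /c0 in hc.
    have h4 : (4%:R : R)^-1 * 4 = 1 by rewrite mulVf // pnatr_eq0.
    nra.
  by rewrite -natrX -natrM ler_nat expnS expn1.
have hkn : (k <= n)%nat by nia.
set m := (n.+1 - k)%nat.
have hm1 : (1 <= m)%nat by rewrite /m; lia.
have hnm : (n <= 2 * m)%nat by rewrite /m; nia.
set X := 2 ^+ m * a m.
have hX0 : 0 <= X by apply: mulr_ge0; [apply: exprn_ge0 | apply: ltW (a_gt0 _)].
have hamX : a m <= X.
  rewrite /X; have := a_gt0 m.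
  have : 1 <= (2:R) ^+ m by apply: exprn_ege1; lra.
  nra.
have hmX : m%:R * X <= 4 := G_R hm1.
have hnX : n%:R * X <= 8.
  have : n%:R <= 2 * m%:R :> R by rewrite -natrM ler_nat.
  move=> h; have := ler_wpM2r hX0 h; lra.
set PW := PW_ge n k; set Q := PY_ge k.
have hPW : PW = \sum_(k <= j < n.+1) a j * d (n - j) by exact: PW_eq.
have hQ : Q = Em * (exp 1 - Sa k) by rewrite /Q PY_eq mulrBr exp1_eq.
have hsplit : Sa n.+1 = Sa k + \sum_(k <= j < n.+1) a j.
  by rewrite /Sa (big_cat_nat (leq0n k) (leqW hkn)).
set T := exp 1 - Sa n.+1.
have hT0 : 0 <= T by rewrite /T subr_ge0 exp_lower.
have hT : T <= 2 * a n.+1 by rewrite /T lerBlDl exp_upper.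
have hsum : \sum_(k <= j < n.+1) a j * (d (n - j) - Em) =
            PW - Em * \sum_(k <= j < n.+1) a j.
  by rewrite hPW mulr_sumr -sumrB; apply: eq_bigr => j _; ring.
have hdiff : PW - Q = \sum_(k <= j < n.+1) a j * (d (n - j) - Em) - Em * T.
  by rewrite hsum hQ /T hsplit; ring.
have he3 : exp 1 <= 3.
  have := exp_upper (isT : (1 <= 1)%nat).
  by rewrite /Sa big_nat1 /a /= invr1; lra.
have he2 : 2 <= exp 1.
  have := exp_lower 2; rewrite /Sa big_nat_recr //= big_nat1 /a /= invr1; lra.
have hEm0 := Em_gt0.
have hEe := exp1_eq.
have hEm1 : Em <= 1 by nra.
have hEm3 : 1 <= 3 * Em by nra.
have hS1 : \sum_(k <= j < n.+1) a j * `|d (n - j) - Em| <= a k * X.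
  apply: le_trans (main_sum hkn); apply: ler_sum_nat => j _.
  apply: ler_wpM2l; [exact: ltW (a_gt0 _) | exact: d_bound].
have han : a n.+1 <= a k * X.
  have hkn1 : (k <= n.+1)%nat by exact: leqW hkn.
  have hs := a_split hkn1; rewrite -/m in hs.
  apply: (le_trans hs).
  apply: ler_wpM2l; [exact: ltW (a_gt0 _) | exact: hamX].
have hak := a_gt0 k.
have hD : `|PW - Q| <= 3 * (a k * X).
  rewrite hdiff; apply: le_trans (ler_normB _ _) _.
  have h1 : `|\sum_(k <= j < n.+1) a j * (d (n - j) - Em)| <= a k * X.
    apply: le_trans (ler_norm_sum _ _ _) _; apply: le_trans hS1.
    apply: ler_sum_nat => j _; rewrite normrM ger0_norm //; exact: ltW (a_gt0 _).
  have h2 : `|Em * T| <= 2 * (a k * X).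
    rewrite ger0_norm; last by apply: mulr_ge0 => //; exact: ltW.
    nra.
  lra.
have hQge : Em * a k <= Q.
  rewrite hQ; apply: ler_wpM2l; first exact: ltW.
  have := exp_lower k.+1; rewrite /Sa big_nat_recr //=; lra.
have hQ0 : 0 < Q by apply: lt_le_trans hQge; apply: mulr_gt0.
rewrite (_ : PW / Q - 1 = (PW - Q) / Q); last by field; rewrite gt_eqF.
rewrite normrM normfV (gtr0_norm hQ0) ler_pdivrMr //.
apply: le_trans hD _.
set y := (n%:R : R)^-1.
have hy : 0 < y by rewrite /y invr_gt0.
have hny : n%:R * y = 1 by rewrite /y mulfV // gt_eqF.
have hXy : X <= 8 * y by nra.
have hK : 1 <= k%:R ^+ 2 :> R by rewrite -natrX ler1n expn_gt0 hk.
have hKE : 24 <= 72 * (k%:R ^+ 2 * Em) :> R by nra.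
have h3 : 3 * X <= 72 * (k%:R ^+ 2 * Em) * y by nra.
rewrite /C0 (_ : 72%:R * k%:R ^+ 2 / n%:R * Q = 72 * k%:R ^+ 2 * y * Q); last by rewrite /y.
have hQ' : 72 * k%:R ^+ 2 * y * (Em * a k) <= 72 * k%:R ^+ 2 * y * Q.
  apply: ler_wpM2l => //; apply: mulr_ge0; last exact: ltW.
  apply: mulr_ge0 => //; apply: exprn_ge0; exact: ler0n.
apply: le_trans hQ'.
nra.
Qed.

End RealPart.

Bind Scope R_scope with R.
Open Scope R_scope.

Theorem mainTheorem7 :
  exists c C : R, 0 < c /\ 0 < C /\
    forall n k : nat, (0 < n)%nat -> (0 < k)%nat ->
      INR k ^ 2 / INR n <= c ->
      Rabs (PW_ge n k / PY_ge k - 1) <= C * INR k ^ 2 / INR n.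
Proof.
exists c0, C0; split; [|split].
- by apply/RltP; rewrite R0E /c0 invr_gt0 ltr0n.
- by apply/RltP; rewrite R0E /C0 ltr0n.
- move=> n k hn hk /RleP hc; apply/RleP.
  move: hc; rewrite RdivE RpowE !INRE => hc.
  rewrite ?RabsE ?RminusE ?RdivE ?R1E ?RmultE ?RpowE ?INRE.
  exact: core.
Qed.
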